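(* Let $\mathcal{L}_Q$ be a lattice liability network over a finite quiver $Q=(V,E,s,t)$, with payment lattices $L_v$, nominal liabilities $\ell_e$, pay-in aggregators $A_v$, distributors $D_v$ and pay-out aggregators $B_v$. Then the set of clearing sections of $\mathcal{L}_Q$ is nonempty and forms a complete lattice under the product order of $C^0=\prod_{v\in V}L_v$.
   Context: A quiver $Q=(V,E,s,t)$ consists of a vertex set $V$, an edge set $E$, and source and target maps $s,t:E\to V$ (multiple edges and self-loops are allowed); $t^{-1}(v)$ is the set of edges into $v$ and $s^{-1}(v)$ the set of edges out of $v$. A lattice liability network $\mathcal{L}_Q$ over a finite quiver $Q$ consists of: (1) for each $v\in V$ a complete lattice $L_v$ (the payment lattice), with top element $\top_v$; (2) for each $e\in E$ a nominal liability $\ell_e\in L_{s(e)}$; (3) for each $v$ a pay-in aggregator $A_v:\prod_{e\in t^{-1}(v)}L_{s(e)}\to L_v$, monotone in each coordinate; (4) for each $v$ a monotone distributor $D_v:L_v\to L_v^{s^{-1}(v)}$ and a monotone pay-out aggregator $B_v:L_v^{s^{-1}(v)}\to L_v$ with $B_v\circ D_v=\mathrm{id}_{L_v}$ and $[D_v(\top_v)]_e\le \ell_e$ for each $e\in s^{-1}(v)$. Let $C^0=\prod_{v\in V}L_v$ with the product order. For $\mathbf{x}=(x_v)\in C^0$ and $e\in E$, the edge payment is $p_e=[D_{s(e)}(x_{s(e)})]_e$. A clearing section is $\mathbf{x}\in C^0$ such that $x_v=A_v\big((p_e)_{e\in t^{-1}(v)}\big)$ for every $v\in V$. *)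

(* Defs.v *)
From mathcomp Require Import all_boot.
Set Implicit Arguments. Unset Strict Implicit. Unset Printing Implicit Defensive.

Record complete_lattice (T : Type) := CompleteLattice {
  cl_le : T -> T -> Prop;
  cl_refl : forall x, cl_le x x;
  cl_trans : forall x y z, cl_le x y -> cl_le y z -> cl_le x z;
  cl_antisym : forall x y, cl_le x y -> cl_le y x -> x = y;
  cl_sup : (T -> Prop) -> T;
  cl_sup_ub : forall (S : T -> Prop) x, S x -> cl_le x (cl_sup S);
  cl_sup_least : forall (S : T -> Prop) y,
      (forall x, S x -> cl_le x y) -> cl_le (cl_sup S) y }.

Definition cl_top T (L : complete_lattice T) : T := cl_sup L (fun _ => True).

Definition is_lub_in X (le : X -> X -> Prop) (P S : X -> Prop) (x : X) :=
  P x /\ (forall y, S y -> le y x) /\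
  (forall z, P z -> (forall y, S y -> le y z) -> le x z).
Definition is_glb_in X (le : X -> X -> Prop) (P S : X -> Prop) (x : X) :=
  P x /\ (forall y, S y -> le x y) /\
  (forall z, P z -> (forall y, S y -> le z y) -> le z x).

Definition prod_le I (L : I -> Type) (CL : forall i, complete_lattice (L i))
  (x y : forall i, L i) : Prop := forall i, cl_le (CL i) (x i) (y i).

Definition monotone T U (CT : complete_lattice T) (CU : complete_lattice U)
  (f : T -> U) := forall x y, cl_le CT x y -> cl_le CU (f x) (f y).

Definition coord_monotone I (L : I -> Type) (CL : forall i, complete_lattice (L i))
  U (CU : complete_lattice U) (f : (forall i, L i) -> U) :=
  forall (i0 : I) (x y : forall i, L i),
    (forall i, i <> i0 -> x i = y i) -> cl_le (CL i0) (x i0) (y i0) ->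
    cl_le CU (f x) (f y).

Definition prod_monotone I (L : I -> Type) (CL : forall i, complete_lattice (L i))
  U (CU : complete_lattice U) (f : (forall i, L i) -> U) :=
  forall x y : forall i, L i, prod_le CL x y -> cl_le CU (f x) (f y).

Section Network.
Variables (V E : finType) (s t : E -> V) (L : V -> Type)
  (D : forall v, L v -> forall e : {e : E | s e = v}, L v)
  (A : forall v, (forall e : {e : E | t e = v}, L (s (sval e))) -> L v).

Definition edge_payment (x : forall v, L v) (e : E) : L (s e) :=
  D (x (s e)) (exist (fun e' => s e' = s e) e erefl).

Definition clearing_section (x : forall v, L v) : Prop :=
  forall v, x v = A (fun e : {e : E | t e = v} => edge_payment x (sval e)).
End Network.

(* Main.v *)
Require Import Defs.
From mathcomp Require Import all_boot.
From Stdlib Require Import Classical ClassicalEpsilon FunctionalExtensionality List.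
Set Implicit Arguments. Unset Strict Implicit.

Section Tarski.
Variables (T : Type) (C : complete_lattice T) (F : T -> T).
Hypothesis Fm : forall x y, cl_le C x y -> cl_le C (F x) (F y).

Definition cinf (P : T -> Prop) := cl_sup C (fun z => forall y, P y -> cl_le C z y).
Lemma cinf_lb P y : P y -> cl_le C (cinf P) y.
Proof. move=> Py; apply: cl_sup_least => z Hz; exact: Hz. Qed.
Lemma cinf_glb P z : (forall y, P y -> cl_le C z y) -> cl_le C z (cinf P).
Proof. move=> H; exact: cl_sup_ub. Qed.

Lemma tarski_lub (S : T -> Prop) : (forall y, S y -> F y = y) ->
  exists u, F u = u /\ (forall y, S y -> cl_le C y u) /\
    (forall z, F z = z -> (forall y, S y -> cl_le C y z) -> cl_le C u z).
Proof.
move=> SF.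
pose P := fun z => cl_le C (F z) z /\ forall y, S y -> cl_le C y z.
pose u := cinf P.
have ub : forall y, S y -> cl_le C y u.
  by move=> y Sy; apply: cinf_glb => z [_ Hz]; exact: Hz.
have h1 : cl_le C (F u) u.
  apply: cinf_glb => z [Hz1 Hz2]; apply: cl_trans (Hz1).
  by apply: Fm; apply: cinf_lb; split.
have h2 : cl_le C u (F u).
  apply: cinf_lb; split; first by apply: Fm.
  move=> y Sy; rewrite -(SF y Sy); apply: Fm; apply: ub; done.
exists u; split; first exact: (cl_antisym h1 h2).
split=> // z Fz Hz; apply: cinf_lb; split=> //; rewrite Fz; apply: cl_refl.
Qed.

Lemma tarski_glb (S : T -> Prop) : (forall y, S y -> F y = y) ->
  exists u, F u = u /\ (forall y, S y -> cl_le C u y) /\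
    (forall z, F z = z -> (forall y, S y -> cl_le C z y) -> cl_le C z u).
Proof.
move=> SF.
pose P := fun z => cl_le C z (F z) /\ forall y, S y -> cl_le C z y.
pose u := cl_sup C P.
have lb : forall y, S y -> cl_le C u y.
  by move=> y Sy; apply: cl_sup_least => z [_ Hz]; exact: Hz.
have h1 : cl_le C u (F u).
  apply: cl_sup_least => z [Hz1 Hz2]; apply: cl_trans (Hz1) _.
  by apply: Fm; apply: cl_sup_ub; split.
have h2 : cl_le C (F u) u.
  apply: cl_sup_ub; split; first by apply: Fm.
  move=> y Sy; rewrite -(SF y Sy); apply: Fm; apply: lb; done.
exists u; split; first exact: (cl_antisym h2 h1).
split=> // z Fz Hz; apply: cl_sup_ub; split=> //; rewrite Fz; apply: cl_refl.
Qed.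
End Tarski.

Definition prod_cl I (L : I -> Type) (CL : forall i, complete_lattice (L i)) :
  complete_lattice (forall i, L i).
refine (@CompleteLattice _ (prod_le CL) _ _ _
  (fun S i => cl_sup (CL i) (fun a => exists x, S x /\ x i = a)) _ _).
- by move=> x i; apply: cl_refl.
- by move=> x y z H1 H2 i; apply: cl_trans (H1 i) (H2 i).
- move=> x y H1 H2; apply: functional_extensionality_dep => i.
  by apply: cl_antisym.
- by move=> S x Sx i; apply: cl_sup_ub; exists x.
- by move=> S y H i; apply: cl_sup_least => a [x [Sx <-]]; apply: H.
Defined.

Lemma sig_list (E : finType) (P : E -> Prop) :
  exists (l : list (sig P)), forall x, In x l.
Proof.
suff H : forall l0 : list E, exists (l : list (sig P)),
    forall x, sval x \in l0 -> In x l.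
  have [l Hl] := H (enum E); exists l => x; apply: Hl; by rewrite mem_enum.
elim=> [|a l0 [l IH]]; first by exists nil.
case: (classic (P a)) => Pa.
- exists (exist _ a Pa :: l) => x; rewrite seq.in_cons => /orP [/eqP ea|xi].
  + left; case: x ea => x px /= ea; subst x; congr exist; apply: proof_irrelevance.
  + by right; apply: IH.
- exists l => x; rewrite seq.in_cons => /orP [/eqP ea|xi].
  + by case: x ea => x px /= ea; subst.
  + by apply: IH.
Qed.

Lemma fin_coord_mono I (Li : I -> Type) (CL : forall i, complete_lattice (Li i))
  U (CU : complete_lattice U) (f : (forall i, Li i) -> U) :
  (exists l, forall i : I, In i l) -> coord_monotone CL CU f -> prod_monotone CL CU f.
Proof.
move=> [l0 Hl0] Hf x y Hxy.
pose mix (l : list I) : forall i, Li i := fun i =>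
  if excluded_middle_informative (In i l) then y i else x i.
have key : forall l, cl_le CU (f x) (f (mix l)).
  elim=> [|a l IH].
  - have -> : mix nil = x.
      apply: functional_extensionality_dep => i; rewrite /mix.
      by case: excluded_middle_informative.
    apply: cl_refl.
  - apply: cl_trans IH _; apply: (Hf a).
    + move=> i nia; rewrite /mix.
      case: excluded_middle_informative => H1; case: excluded_middle_informative => H2 //.
      * by exfalso; apply: H2; right.
      * by case: H2 => // ai; exfalso; apply: nia.
    + rewrite /mix; case: excluded_middle_informative => H1;
        case: excluded_middle_informative => H2; try apply: cl_refl; try apply: Hxy.
      by exfalso; apply: H2; left.
have -> : y = mix l0.
  apply: functional_extensionality_dep => i; rewrite /mix.
  by case: excluded_middle_informative.
exact: key.
Qed.

Theorem theorem1
  (V E : finType) (s t : E -> V)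
  (L : V -> Type) (CL : forall v, complete_lattice (L v))
  (ell : forall e : E, L (s e))
  (A : forall v, (forall e : {e : E | t e = v}, L (s (sval e))) -> L v)
  (D : forall v, L v -> forall e : {e : E | s e = v}, L v)
  (B : forall v, (forall e : {e : E | s e = v}, L v) -> L v)
  (hA : forall v, coord_monotone (fun e : {e : E | t e = v} => CL (s (sval e)))
                                 (CL v) (A v))
  (hD : forall v, forall x y : L v, cl_le (CL v) x y ->
          forall e : {e : E | s e = v}, cl_le (CL v) (D v x e) (D v y e))
  (hB : forall v, prod_monotone (fun _ : {e : E | s e = v} => CL v) (CL v) (B v))
  (hBD : forall v (x : L v), B v (D v x) = x)
  (hDtop : forall v (e : {e : E | s e = v}),
      cl_le (CL v) (D v (cl_top (CL v)) e)
        (eq_rect_r (fun w => L w) (ell (sval e)) (esym (svalP e)))) :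
  (exists x, clearing_section D A x) /\
  (forall S : (forall v, L v) -> Prop,
      (forall x, S x -> clearing_section D A x) ->
      (exists x, is_lub_in (prod_le CL) (clearing_section D A) S x) /\
      (exists x, is_glb_in (prod_le CL) (clearing_section D A) S x)).
Proof.
pose F (x : forall v, L v) : forall v, L v :=
  fun v => A v (fun e : {e : E | t e = v} => edge_payment D x (sval e)).
have Fm : forall x y, cl_le (prod_cl CL) x y -> cl_le (prod_cl CL) (F x) (F y).
  move=> x y Hxy v; rewrite /F.
  apply: (fin_coord_mono (sig_list _) (hA v)) => e.
  rewrite /edge_payment; apply: hD; exact: Hxy.
have cs : forall x, clearing_section D A x <-> F x = x.
  move=> x; split.
  - move=> H; apply: functional_extensionality_dep => v; by rewrite H.
  - by move=> H v; rewrite -{1}H.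
have main : forall S : (forall v, L v) -> Prop,
      (forall x, S x -> clearing_section D A x) ->
      (exists x, is_lub_in (prod_le CL) (clearing_section D A) S x) /\
      (exists x, is_glb_in (prod_le CL) (clearing_section D A) S x).
  move=> S HS.
  have SF : forall y, S y -> F y = y by move=> y /HS /cs.
  split.
  - have [u [Fu [H1 H2]]] := tarski_lub Fm SF.
    exists u; split; first by apply/cs.
    split=> // z /cs; exact: H2.
  - have [u [Fu [H1 H2]]] := tarski_glb Fm SF.
    exists u; split; first by apply/cs.
    split=> // z /cs; exact: H2.
split=> //.
have [[x [Hx _]] _] := main (fun _ => False) (fun _ f => match f with end).
by exists x.
Qed.
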